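(* Consider $\mathrm{CC}(N_{11},N_{10},N_{01},N_{00})=\frac{N_{11}N_{00}-N_{10}N_{01}}{\sqrt{(N_{11}+N_{10})(N_{11}+N_{01})(N_{00}+N_{10})(N_{00}+N_{01})}}$ on nonnegative real arguments for which all four factors under the square root are positive. If $N_{10}+N_{01}>0$, then $\mathrm{CC}$ is strictly increasing in $N_{11}$ (other arguments fixed) and strictly increasing in $N_{00}$ (other arguments fixed). If $N_{11}+N_{00}>0$, then $\mathrm{CC}$ is strictly decreasing in $N_{10}$ and strictly decreasing in $N_{01}$. The same monotonicity holds for $\mathrm{CD}=\frac1\pi\arccos\mathrm{CC}$ with all directions reversed.
   Context: $N_{11},N_{10},N_{01},N_{00}$ play the role of pair-counts of two clusterings: numbers of element pairs that are together in both clusterings, in the first only, in the second only, and in neither. *)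

(* Defs.v *)
From Stdlib Require Import Reals.
Open Scope R_scope.

Definition CC (n11 n10 n01 n00 : R) : R :=
  (n11 * n00 - n10 * n01) /
  sqrt ((n11 + n10) * (n11 + n01) * (n00 + n10) * (n00 + n01)).

Definition CD (n11 n10 n01 n00 : R) : R := / PI * acos (CC n11 n10 n01 n00).

Definition dom (n11 n10 n01 n00 : R) : Prop :=
  0 <= n11 /\ 0 <= n10 /\ 0 <= n01 /\ 0 <= n00 /\
  0 < n11 + n10 /\ 0 < n11 + n01 /\ 0 < n00 + n10 /\ 0 < n00 + n01.

(* Main.v *)
Require Import Defs.
From Stdlib Require Import Reals Lra Psatz.
From Coquelicot Require Import Coquelicot.
Open Scope R_scope.
Lemma dd b c d x : 0 < x + b -> 0 < x + c -> 0 < d+b -> 0 < d+c ->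
  derivable_pt_lim (fun x => CC x b c d) x
   ((2*d*(x+b)*(x+c) - (x*d - b*c)*(2*x+b+c)) * ((d+b)*(d+c)) /
     (2 * ((x + b) * (x + c) * (d + b) * (d + c)) * sqrt ((x + b) * (x + c) * (d + b) * (d + c)))).
Proof.
intros h1 h2 h3 h4.
assert (hP : 0 < (x + b) * (x + c) * (d + b) * (d + c)).
{ replace ((x + b) * (x + c) * (d + b) * (d + c)) with ((x + b) * (x + c) * ((d + b) * (d + c))) by ring.
  apply Rmult_lt_0_compat; apply Rmult_lt_0_compat; lra. }
assert (hS := sqrt_lt_R0 _ hP).
assert (hSS := Rsqr_sqrt _ (Rlt_le _ _ hP)). unfold Rsqr in hSS.
apply is_derive_Reals. unfold CC. auto_derive.
- lra.
- rewrite hSS. remember (sqrt ((x + b) * (x + c) * (d + b) * (d + c))) as S. field. repeat split; lra.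
Qed.


Lemma core a a' b c d : 0 < b + c -> dom a b c d -> dom a' b c d -> a < a' ->
  CC a b c d < CC a' b c d.
Proof.
intros hbc [ha [hb [hc [hd [h1 [h2 [h3 h4]]]]]]] [_ [_ [_ [_ [h1' [h2' _]]]]]] haa.
destruct (MVT_cor2 (fun x => CC x b c d) (fun x => (2*d*(x+b)*(x+c) - (x*d - b*c)*(2*x+b+c)) * ((d+b)*(d+c)) /
     (2 * ((x + b) * (x + c) * (d + b) * (d + c)) * sqrt ((x + b) * (x + c) * (d + b) * (d + c)))) a a' haa)
  as [z [hz1 hz2]].
{ intros z hz. apply dd; lra. }
assert (Hnum : 0 < 2*d*(z+b)*(z+c) - (z*d - b*c)*(2*z+b+c)).
{ replace (2*d*(z+b)*(z+c) - (z*d - b*c)*(2*z+b+c)) with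
    (z*d*(b+c) + 2*b*c*d + 2*z*b*c + b*c*(b+c)) by ring.
  assert (0 <= b*c) by nra.
  assert (0 <= b*c*d) by nra. assert (0 <= z*b*c) by nra.
  destruct (Req_dec d 0) as [e|e].
  - subst d. assert (0 < b*c) by nra. nra.
  - assert (0 < z*d) by nra. nra. }
assert (hP : 0 < (z + b) * (z + c) * (d + b) * (d + c)).
{ replace ((z + b) * (z + c) * (d + b) * (d + c)) with ((z + b) * (z + c) * ((d + b) * (d + c))) by ring.
  apply Rmult_lt_0_compat; apply Rmult_lt_0_compat; lra. }
assert (hS := sqrt_lt_R0 _ hP).
assert (0 < (d+b)*(d+c)) by nra.
assert (0 < (2*d*(z+b)*(z+c) - (z*d - b*c)*(2*z+b+c)) * ((d+b)*(d+c)) /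
     (2 * ((z + b) * (z + c) * (d + b) * (d + c)) * sqrt ((z + b) * (z + c) * (d + b) * (d + c)))).
{ apply Rdiv_lt_0_compat; apply Rmult_lt_0_compat; lra. }
nra.
Qed.

Lemma sym1 a b c d : CC a b c d = CC d b c a.
Proof. unfold CC. f_equal. ring. f_equal. ring. Qed.
Lemma sym2 a b c d : CC a b c d = - CC b a d c.
Proof. unfold CC. replace ((b + a) * (b + d) * (c + a) * (c + d)) with ((a + b) * (a + c) * (d + b) * (d + c)) by ring. unfold Rdiv. ring. Qed.
Lemma sym3 a b c d : CC a b c d = - CC c d a b.
Proof. unfold CC. replace ((c + d) * (c + a) * (b + d) * (b + a)) with ((a + b) * (a + c) * (d + b) * (d + c)) by ring. unfold Rdiv. ring. Qed.

Lemma bound a b c d : dom a b c d -> -1 <= CC a b c d <= 1.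
Proof.
intros [ha [hb [hc [hd [h1 [h2 [h3 h4]]]]]]].
remember (a*d - b*c) as Nn eqn:HN.
remember ((a + b) * (a + c) * (d + b) * (d + c)) as Xx eqn:HX.
assert (hX : Nn*Nn <= Xx).
{ rewrite HN, HX.
  replace ((a + b) * (a + c) * (d + b) * (d + c)) with (((a+b)*(d+c))*((a+c)*(d+b))) by ring.
  assert (e1 : a*d+b*c <= (a+b)*(d+c)) by nra.
  assert (e2 : a*d+b*c <= (a+c)*(d+b)) by nra.
  assert (0 <= a*d+b*c) by nra.
  assert ((a*d+b*c)*(a*d+b*c) <= ((a+b)*(d+c))*((a+c)*(d+b))).
  { apply Rmult_le_compat; lra. }
  assert (0 <= a*b*c*d) by (repeat apply Rmult_le_pos; lra). nra. }
assert (hP : 0 < Xx).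
{ rewrite HX. replace ((a + b) * (a + c) * (d + b) * (d + c)) with ((a + b) * (a + c) * ((d + b) * (d + c))) by ring.
  apply Rmult_lt_0_compat; apply Rmult_lt_0_compat; lra. }
assert (hS := sqrt_lt_R0 _ hP).
assert (hA : Rabs Nn <= sqrt Xx).
{ rewrite <- sqrt_Rsqr_abs. apply sqrt_le_1_alt. unfold Rsqr. lra. }
unfold CC. rewrite <- HN, <- HX.
assert (-sqrt Xx <= Nn <= sqrt Xx) by (unfold Rabs in hA; destruct (Rcase_abs Nn); split; lra).
split; apply (Rmult_le_reg_r (sqrt Xx)); auto; unfold Rdiv; rewrite Rmult_assoc, Rinv_l; lra.
Qed.

Lemma acos_strict x y : -1 <= x <= 1 -> -1 <= y <= 1 -> x < y -> acos y < acos x.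
Proof.
intros hx hy hxy. destruct (Rlt_or_le (acos y) (acos x)) as [h|h]; auto.
exfalso. destruct h as [h|h].
- assert (H := cos_decreasing_1 _ _ (proj1 (acos_bound x)) (proj2 (acos_bound x))
     (proj1 (acos_bound y)) (proj2 (acos_bound y)) h).
  rewrite !cos_acos in H; auto; lra.
- assert (cos (acos y) = cos (acos x)) by (rewrite h; auto). rewrite !cos_acos in H; auto; lra.
Qed.

Lemma CD_lt a b c d a' b' c' d' : dom a b c d -> dom a' b' c' d' ->
  CC a b c d < CC a' b' c' d' -> CD a' b' c' d' < CD a b c d.
Proof.
intros h h' hl. unfold CD. assert (0 < / PI) by (apply Rinv_0_lt_compat; exact PI_RGT_0).
apply Rmult_lt_compat_l; auto. apply acos_strict; auto using bound.
Qed.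

Lemma dom1 a b c d : dom a b c d -> dom d b c a.
Proof. unfold dom; lra. Qed.
Lemma dom2 a b c d : dom a b c d -> dom b a d c.
Proof. unfold dom; lra. Qed.
Lemma dom3 a b c d : dom a b c d -> dom c d a b.
Proof. unfold dom; lra. Qed.

Lemma P1 a a' n10 n01 n00 : 0 < n10 + n01 ->
     dom a n10 n01 n00 -> dom a' n10 n01 n00 -> a < a' ->
     CC a n10 n01 n00 < CC a' n10 n01 n00.
Proof. apply core. Qed.
Lemma P2 n11 n10 n01 d d' : 0 < n10 + n01 ->
     dom n11 n10 n01 d -> dom n11 n10 n01 d' -> d < d' ->
     CC n11 n10 n01 d < CC n11 n10 n01 d'.
Proof. intros. rewrite (sym1 n11 _ _ d), (sym1 n11 _ _ d'). apply core; auto using dom1. Qed.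
Lemma P3 n11 b b' n01 n00 : 0 < n11 + n00 ->
     dom n11 b n01 n00 -> dom n11 b' n01 n00 -> b < b' ->
     CC n11 b' n01 n00 < CC n11 b n01 n00.
Proof. intros. rewrite (sym2 n11 b), (sym2 n11 b').
  assert (CC b n11 n00 n01 < CC b' n11 n00 n01) by (apply core; auto using dom2; lra). lra. Qed.
Lemma P4 n11 n10 c c' n00 : 0 < n11 + n00 ->
     dom n11 n10 c n00 -> dom n11 n10 c' n00 -> c < c' ->
     CC n11 n10 c' n00 < CC n11 n10 c n00.
Proof. intros. rewrite (sym3 n11 n10 c), (sym3 n11 n10 c').
  assert (CC c n00 n11 n10 < CC c' n00 n11 n10) by (apply core; auto using dom3; lra). lra. Qed.

Theorem mainTheorem9 :
  (forall a a' n10 n01 n00, 0 < n10 + n01 ->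
     dom a n10 n01 n00 -> dom a' n10 n01 n00 -> a < a' ->
     CC a n10 n01 n00 < CC a' n10 n01 n00) /\
  (forall n11 n10 n01 d d', 0 < n10 + n01 ->
     dom n11 n10 n01 d -> dom n11 n10 n01 d' -> d < d' ->
     CC n11 n10 n01 d < CC n11 n10 n01 d') /\
  (forall n11 b b' n01 n00, 0 < n11 + n00 ->
     dom n11 b n01 n00 -> dom n11 b' n01 n00 -> b < b' ->
     CC n11 b' n01 n00 < CC n11 b n01 n00) /\
  (forall n11 n10 c c' n00, 0 < n11 + n00 ->
     dom n11 n10 c n00 -> dom n11 n10 c' n00 -> c < c' ->
     CC n11 n10 c' n00 < CC n11 n10 c n00) /\
  (forall a a' n10 n01 n00, 0 < n10 + n01 ->
     dom a n10 n01 n00 -> dom a' n10 n01 n00 -> a < a' ->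
     CD a' n10 n01 n00 < CD a n10 n01 n00) /\
  (forall n11 n10 n01 d d', 0 < n10 + n01 ->
     dom n11 n10 n01 d -> dom n11 n10 n01 d' -> d < d' ->
     CD n11 n10 n01 d' < CD n11 n10 n01 d) /\
  (forall n11 b b' n01 n00, 0 < n11 + n00 ->
     dom n11 b n01 n00 -> dom n11 b' n01 n00 -> b < b' ->
     CD n11 b n01 n00 < CD n11 b' n01 n00) /\
  (forall n11 n10 c c' n00, 0 < n11 + n00 ->
     dom n11 n10 c n00 -> dom n11 n10 c' n00 -> c < c' ->
     CD n11 n10 c n00 < CD n11 n10 c' n00).
Proof.
repeat split; intros.
- apply P1; auto.
- apply P2; auto.
- apply P3; auto.
- apply P4; auto.
- apply CD_lt; auto. apply P1; auto.
- apply CD_lt; auto. apply P2; auto.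
- apply CD_lt; auto. apply P3; auto.
- apply CD_lt; auto. apply P4; auto.
Qed.
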